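(* Let $n=2k+1$ with $k$ a positive integer, and let $(\Gamma,+)$ be an abelian group of order $n$ with neutral element $e$ such that $\sum_{g\in\Gamma} g = e$ and $2g\neq e$ for all $g\in\Gamma\setminus\{e\}$. Let $p,q$ be two new symbols and let $P_n=(\Gamma\times(\Gamma\setminus\{e\}))\cup\{p,q\}$. Define the lines $L_g=\{(h,g): h\in\Gamma\}$ for $g\in\Gamma\setminus\{e\}$; $l_{p_g}=\{(g,h): h\in\Gamma\setminus\{e\}\}\cup\{p\}$ for $g\in\Gamma$; $l_{q_g}=\{(h,h+g): h\in\Gamma,\ h+g\neq e\}\cup\{q\}$ for $g\in\Gamma$; and let $\mathcal{L}_n$ be the family of all these lines. Then the linear system $\mathcal{C}_{n,n+1}=(P_n,\mathcal{L}_n)$ satisfies $$\tau(\mathcal{C}_{n,n+1})=\nu_2(\mathcal{C}_{n,n+1})=n+1,$$ and it has the smallest possible number of lines for this property, in the following sense: $p$ and $q$ are points of largest and second largest degree (both equal to $n$) and $|\mathcal{L}_n|=3n-1=\deg(p)+\deg(q)+\nu_2(\mathcal{C}_{n,n+1})-2$, whereas every linear system $(P,\mathcal{L})$ with $|\mathcal{L}|>\nu_2(P,\mathcal{L})$ and $|\mathcal{L}|\le \deg(p')+\deg(q')+\nu_2(P,\mathcal{L})-3$, where $\deg(p')=\Delta(P,\mathcal{L})$ and $\deg(q')=\max\{\deg(x):x\in P\setminus\{p'\}\}$, satisfies $\tau(P,\mathcal{L})\le\nu_2(P,\mathcal{L})-1$.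
   Context: A linear system is a pair $(P,\mathcal{L})$ with $P$ a finite set of points and $\mathcal{L}$ a family of subsets of $P$ (lines) such that any two distinct lines share at most one point. A transversal is a set of points meeting every line; $\tau$ is the minimum cardinality of a transversal. A 2-packing is a set of lines no three of which have a common point; $\nu_2$ is the maximum cardinality of a 2-packing. $\deg(x)$ is the number of lines containing $x$ and $\Delta$ is the maximum degree. *)

(* Defs.v *)
From HB Require Import structures.
From mathcomp Require Import all_boot all_order all_algebra.
Set Implicit Arguments. Unset Strict Implicit. Unset Printing Implicit Defensive.
Import GRing.Theory.

Section LinearSystems.
Variable T : finType.

Definition linear_system (P : {set T}) (L : {set {set T}}) : Prop :=
  (forall l, l \in L -> l \subset P) /\
  (forall l1 l2, l1 \in L -> l2 \in L -> l1 != l2 -> #|l1 :&: l2| <= 1).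

Definition deg (L : {set {set T}}) (x : T) : nat := #|[set l in L | x \in l]|.

Definition Delta (P : {set T}) (L : {set {set T}}) : nat := \max_(x in P) deg L x.

Definition max_deg_except (P : {set T}) (L : {set {set T}}) (x0 : T) : nat :=
  \max_(x in P :\ x0) deg L x.

Definition transversal (P : {set T}) (L : {set {set T}}) (X : {set T}) : bool :=
  (X \subset P) && [forall l in L, X :&: l != set0].

(* minimum size of a transversal (defaults to #|P| if no transversal exists,
   which never happens when all lines are non-empty) *)
Definition tau (P : {set T}) (L : {set {set T}}) : nat :=
  \big[minn/#|P|]_(X : {set T} | transversal P L X) #|X|.

Definition two_packing (L : {set {set T}}) (S : {set {set T}}) : bool :=
  (S \subset L) && [forall x : T, #|[set l in S | x \in l]| <= 2].

Definition nu2 (L : {set {set T}}) : nat :=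
  \max_(S : {set {set T}} | two_packing L S) #|S|.

End LinearSystems.

Section Construction.
Variable G : finZmodType.

Definition CT := ((G * G) + bool)%type.
Definition pt_p : CT := inr true.
Definition pt_q : CT := inr false.

Definition Pn : {set CT} :=
  [set (inl (hg.1, hg.2) : CT) | hg in [set hg : G * G | hg.2 != 0%R]]
    :|: [set pt_p; pt_q].

Definition line_L (g : G) : {set CT} := [set (inl (h, g) : CT) | h : G].

Definition line_p (g : G) : {set CT} :=
  [set (inl (g, h) : CT) | h in [set h : G | h != 0%R]] :|: [set pt_p].

Definition line_q (g : G) : {set CT} :=
  [set (inl (h, (h + g)%R) : CT) | h in [set h : G | (h + g)%R != 0%R]] :|: [set pt_q].

Definition Ln : {set {set CT}} :=
  [set line_L g | g in [set g : G | g != 0%R]]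
    :|: [set line_p g | g : G] :|: [set line_q g | g : G].

End Construction.

(* Main.v *)
Require Import Defs.
From HB Require Import structures.
From mathcomp Require Import all_boot all_order all_algebra.
From mathcomp Require Import zify.
Set Implicit Arguments. Unset Strict Implicit. Unset Printing Implicit Defensive.
Import GRing.Theory.

Section Gen.
Variable T : finType.
Implicit Types (P X : {set T}) (L : {set {set T}}).

Lemma card_le1 (U : finType) (A : {set U}) :
  (forall x y, x \in A -> y \in A -> x = y) -> #|A| <= 1.
Proof.
move=> H; rewrite leqNgt; apply/negP => /card_gt1P [x [y [xA yA]]].
by rewrite (H x y xA yA) eqxx.
Qed.

Lemma meet_ne0 X (l : {set T}) z : z \in X -> z \in l -> X :&: l != set0.
Proof. by move=> zX zl; apply/set0Pn; exists z; rewrite inE zX zl. Qed.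

Lemma tau_le P L X : Defs.transversal P L X -> tau P L <= #|X|.
Proof.
move=> tX; rewrite /tau; elim: (index_enum _) (mem_index_enum X) => // i r IH.
rewrite big_cons inE => /orP[/eqP<-|/IH H]; first by rewrite tX geq_minl.
by case: ifP => _ //; rewrite geq_min H orbT.
Qed.

Lemma nu2_ge L S : two_packing L S -> #|S| <= nu2 L.
Proof. by move=> tS; rewrite /nu2; apply: (leq_bigmax_cond S). Qed.

Lemma two_lines P L l1 l2 x y : linear_system P L -> l1 \in L -> l2 \in L ->
  x != y -> x \in l1 -> y \in l1 -> x \in l2 -> y \in l2 -> l1 = l2.
Proof.
move=> [_ HL] l1L l2L xy x1 y1 x2 y2; apply/eqP; apply/negP => /negP ne.
have := HL _ _ l1L l2L ne; apply/negP; rewrite -ltnNge; apply/card_gt1P.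
by exists x, y; rewrite !inE x1 y1 x2 y2.
Qed.


Lemma part2 P L p' :
  linear_system P L -> (forall l, l \in L -> l != set0) -> p' \in P ->
  deg L p' = Delta P L ->
  #|L| + 3 <= deg L p' + max_deg_except P L p' + nu2 L -> tau P L + 1 <= nu2 L.
Proof.
move=> LS Lne pP degp Hc.
have [LsubP _] := LS.
pose pk (l : {set T}) := odflt p' [pick x in l].
have pkP : forall l, l \in L -> pk l \in l.
  move=> l lL; rewrite /pk; case: pickP => [x /= -> //|/= H].
  by move: (Lne l lL) => /set0Pn [x]; rewrite (H x).
have inP : forall l x, l \in L -> x \in l -> x \in P.
  by move=> l x lL xl; apply: (subsetP (LsubP l lL)).
set A := [set l in L | p' \in l].
have cardA : #|A| = deg L p' by [].
have AL : A \subset L by apply/subsetP => l; rewrite inE => /andP[].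
set b := max_deg_except P L p'.
case: (leqP b 1) => hb.
  have tX : Defs.transversal P L (p' |: pk @: (L :\: A)).
    apply/andP; split.
      apply/subsetP => x /setU1P [->//|/imsetP[l]].
      by rewrite inE => /andP[_ lL] ->; apply: (inP l) => //; apply: pkP.
    apply/forallP => l; apply/implyP => lL.
    case pl: (p' \in l); first by apply: (meet_ne0 (z:=p')) => //; rewrite setU11.
    apply: (meet_ne0 (z:=(pk l))); last exact: pkP.
    by rewrite inE; apply/orP; right; apply/imsetP; exists l => //; rewrite !inE pl lL.
  have := tau_le tX.
  have c1 : #|p' |: pk @: (L :\: A)| <= 1 + #|L :\: A|.
    by rewrite cardsU1; apply: leq_add; [case: (_ \notin _)| exact: leq_imset_card].
  have c2 : #|L :\: A| + #|A| = #|L|.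
    by rewrite -(cardsID A L) (setIidPr AL) addnC.
  rewrite cardA in c2. lia.
have [q' Hq' bq] : {q' | q' \in P :\ p' & b = deg L q'}.
  apply: eq_bigmax_cond; apply/card_gt0P.
  case: (set_0Vmem (P :\ p')) => [E|[x hx]]; last by exists x.
  by move: hb; rewrite /b /max_deg_except E big_set0.
move: Hq'; rewrite !inE => /andP[qp qP].
set B := [set l in L | q' \in l].
have cardB : #|B| = b by rewrite bq.
have BL : B \subset L by apply/subsetP => l; rewrite inE => /andP[].
set R := L :\: (A :|: B).
have ABL : A :|: B \subset L by rewrite subUset AL BL.
have cR : #|R| + #|A :|: B| = #|L|.
  by rewrite -(cardsID (A :|: B) L) (setIidPr ABL) addnC.
have cU := cardsU A B.
have cIB : #|A :&: B| <= #|B| by apply: subset_leq_card; apply: subsetIr.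
have cI : #|A :&: B| <= 1.
  apply: card_le1 => l1 l2; rewrite !inE => /andP[/andP[l1L p1] /andP[_ q1]].
  move=> /andP[/andP[l2L p2] /andP[_ q2]].
  by apply: (two_lines (x:=p') (y:=q') LS l1L l2L) => //; rewrite eq_sym.
have ab : b <= deg L p' by rewrite bq degp /Delta; apply: (leq_bigmax_cond q').
have RP : forall r, r \in R -> [/\ r \in L, p' \notin r & q' \notin r].
  move=> r; rewrite !inE negb_or => /andP[/andP[]].
  by case: (r \in L); case: (p' \in r); case: (q' \in r).
have pkR : forall r, r \in R -> pk r \in pk @: R by move=> r rR; apply: imset_f.
have tX2 : Defs.transversal P L (p' |: (q' |: pk @: R)).
  apply/andP; split.
    apply/subsetP => x /setU1P [->//|/setU1P [->//|/imsetP[l]]].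
    by move=> /RP[lL _ _] ->; apply: (inP l) => //; apply: pkP.
  apply/forallP => l; apply/implyP => lL.
  case pl: (p' \in l); first by apply: (meet_ne0 (z:=p')) => //; rewrite setU11.
  case ql: (q' \in l); first by apply: (meet_ne0 (z:=q')) => //; rewrite !inE eqxx orbT.
  have lR : l \in R by rewrite !inE pl ql lL.
  apply: (meet_ne0 (z:=(pk l))); last exact: pkP.
  by rewrite !inE pkR ?orbT.
have cX2 : #|p' |: (q' |: pk @: R)| <= 2 + #|R|.
  rewrite cardsU1 cardsU1 addnA; apply: leq_add; last exact: leq_imset_card.
  by case: (_ \notin _); case: (_ \notin _).
have tau2 := tau_le tX2.
case: (posnP #|A :&: B|) => cI0.
  rewrite cardA cardB in cU Hc cIB. clear -cU Hc cIB cR tau2 cX2 cI0. lia.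
have cI1 : #|A :&: B| = 1 by apply/eqP; rewrite eqn_leq cI cI0.
have [l0] : exists l0, l0 \in A :&: B by apply/card_gt0P; rewrite cI1.
rewrite !inE => /andP[/andP[l0L pl0] /andP[_ ql0]].
have [A1] : exists A1, A1 \in A :\ l0.
  apply/card_gt0P; move: (cardsD1 l0 A) ab hb; rewrite cardA.
  by case: (l0 \in A) => /= -> ab hb; clear -ab hb; lia.
rewrite !inE => /andP[A1l0 /andP[A1L pA1]].
have qA1 : q' \notin A1.
  apply/negP => qA1; move/negP: A1l0; apply; apply/eqP.
  by apply: (two_lines (x:=p') (y:=q') LS A1L l0L) => //; rewrite eq_sym.
case: (boolP [exists r1 in R, exists r2 in R, (r1 != r2) && (r1 :&: r2 != set0)]).
  move=> /existsP[r1 /andP[r1R /existsP[r2 /andP[r2R /andP[ne /set0Pn[z]]]]]].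
  rewrite inE => /andP[z1 z2].
  have [r1L _ _] := RP r1 r1R.
  have tX : Defs.transversal P L (p' |: (q' |: (z |: pk @: (R :\ r1 :\ r2)))).
    apply/andP; split.
      apply/subsetP => x /setU1P [->//|/setU1P [->//|/setU1P [->|/imsetP[l]]]].
        by apply: (inP r1).
      by move=> /setD1P[_ /setD1P[_ /RP[lL _ _]]] ->; apply: (inP l) => //; apply: pkP.
    apply/forallP => l; apply/implyP => lL.
    case pl: (p' \in l); first by apply: (meet_ne0 (z:=p')) => //; rewrite setU11.
    case ql: (q' \in l); first by apply: (meet_ne0 (z:=q')) => //; rewrite !inE eqxx orbT.
    have lR : l \in R by rewrite !inE pl ql lL.
    case: (eqVneq l r1) => [->|lr1].
      by apply: (meet_ne0 (z:=z)) => //; rewrite !in_setU1 eqxx !orbT.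
    case: (eqVneq l r2) => [->|lr2].
      by apply: (meet_ne0 (z:=z)) => //; rewrite !in_setU1 eqxx !orbT.
    apply: (meet_ne0 (z:=(pk l))); last exact: pkP.
    by rewrite !in_setU1 imset_f ?orbT // !in_setD1 lr1 lr2 lR.
  have := tau_le tX.
  have cX : #|p' |: (q' |: (z |: pk @: (R :\ r1 :\ r2)))| <= 3 + #|R :\ r1 :\ r2|.
    rewrite cardsU1 cardsU1 cardsU1 !addnA; apply: leq_add; last exact: leq_imset_card.
    by case: (_ \notin _); case: (_ \notin _); case: (_ \notin _).
  have e1 := cardsD1 r1 R; have e2 := cardsD1 r2 (R :\ r1).
  rewrite r1R in e1; rewrite in_setD1 eq_sym ne r2R in e2.
  rewrite cardA cardB in cU Hc cIB. clear -cX e1 e2 cR cU Hc cIB cI1; lia.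
move=> Rdisj.
have Rd : forall r1 r2 z, r1 \in R -> r2 \in R -> z \in r1 -> z \in r2 -> r1 = r2.
  move=> r1 r2 z r1R r2R z1 z2; apply/eqP; apply/negPn/negP => ne.
  move/negP: Rdisj; apply; apply/existsP; exists r1; rewrite r1R; apply/existsP.
  by exists r2; rewrite r2R ne; apply/set0Pn; exists z; rewrite inE z1 z2.
case: (boolP [forall Bj in B :\ l0, exists z in A1 :&: Bj, exists r in R, z \in r]).
  move=> /forallP Hall.
  pose f r := odflt (pk r) [pick z in r :&: A1].
  have fP : forall r, r \in R -> f r \in r.
    move=> r rR; rewrite /f; case: pickP => [z /=|_ /=]; first by rewrite inE => /andP[].
    by have [rL _ _] := RP r rR; exact: pkP.
  have tX : Defs.transversal P L (p' |: f @: R).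
    apply/andP; split.
      apply/subsetP => x /setU1P [->//|/imsetP[r rR ->]].
      by have [rL _ _] := RP r rR; apply: (inP r) => //; apply: fP.
    apply/forallP => l; apply/implyP => lL.
    case pl: (p' \in l); first by apply: (meet_ne0 (z:=p')) => //; rewrite setU11.
    case ql: (q' \in l); last first.
      have lR : l \in R by rewrite !inE pl ql lL.
      apply: (meet_ne0 (z:=(f l))); last exact: fP.
      by rewrite in_setU1 imset_f ?orbT.
    have lB : l \in B :\ l0.
      rewrite !inE lL ql /= andbT; apply/eqP => ll0; by rewrite ll0 pl0 in pl.
    move: (Hall l); rewrite lB /= => /existsP[z /andP[]]; rewrite inE => /andP[zA1 zl].
    move=> /existsP[r /andP[rR zr]].
    apply: (meet_ne0 (z:=z)) => //.
    have -> : z = f r.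
      rewrite /f; case: pickP => [z' /=|H]; last by move: (H z); rewrite inE zr zA1.
      rewrite inE => /andP[z'r z'A1]; apply/eqP; apply/negPn/negP => ne.
      have [rL pr _] := RP r rR.
      have rA1 := two_lines LS rL A1L ne zr z'r zA1 z'A1.
      by rewrite rA1 pA1 in pr.
    by rewrite in_setU1 imset_f ?orbT.
  have := tau_le tX.
  have cX : #|p' |: f @: R| <= 1 + #|R|.
    by rewrite cardsU1; apply: leq_add; [case: (_ \notin _)| exact: leq_imset_card].
  rewrite cardA cardB in cU Hc cIB. clear -cX cR cU Hc cIB cI1; lia.
move=> /forallPn [Bj]; rewrite negb_imply => /andP[BjB /existsPn Hno].
move: BjB; rewrite !inE => /andP[Bjl0 /andP[BjL qBj]].
have pBj : p' \notin Bj.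
  apply/negP => pBj; move/negP: Bjl0; apply; apply/eqP.
  by apply: (two_lines (x:=p') (y:=q') LS BjL l0L) => //; rewrite eq_sym.
have Hno' : forall z r, z \in A1 -> z \in Bj -> r \in R -> z \notin r.
  move=> z r zA zB rR; apply/negP => zr; move: (Hno z); rewrite inE zA zB /=.
  by move/negP; apply; apply/existsP; exists r; rewrite rR zr.
set T3 := l0 |: (A1 |: [set Bj]).
set S := T3 :|: R.
have nR : forall l, l \in R -> p' \notin l by move=> l /RP[].
have nRq : forall l, l \in R -> q' \notin l by move=> l /RP[].
have l0R : l0 \notin R by apply/negP => /nR; rewrite pl0.
have A1R : A1 \notin R by apply/negP => /nR; rewrite pA1.
have BjR : Bj \notin R by apply/negP => /nRq; rewrite qBj.
have A1Bj : A1 != Bj by apply/negP => /eqP e; by move: pBj; rewrite -e pA1.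
have cS : #|S| = 3 + #|R|.
  rewrite /S /T3 -!setUA !cardsU1 !in_setU1 !(eq_sym l0) (negbTE A1l0) (negbTE Bjl0).
  by rewrite (negbTE A1Bj) (negbTE l0R) (negbTE A1R) (negbTE BjR).
have cT3 : #|T3| = 3.
  rewrite /T3 !cardsU1 !in_setU1 !in_set1 !(eq_sym l0) (negbTE A1l0) (negbTE Bjl0).
  by rewrite (negbTE A1Bj) cards1.
have tS : two_packing L S.
  apply/andP; split.
    apply/subsetP => l; rewrite /S /T3 in_setU !in_setU1 in_set1.
    by case/orP => [/orP [/eqP->|/orP[/eqP->|/eqP->]]//|/RP[]].
  apply/forallP => x.
  set Sx := [set l in S | x \in l].
  have sub : Sx \subset [set l in T3 | x \in l] :|: [set l in R | x \in l].
    apply/subsetP => l; rewrite /Sx in_set /S in_setU => /andP[/orP[lT|lR] xl].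
      by apply/setUP; left; rewrite in_set lT xl.
    by apply/setUP; right; rewrite in_set lR xl.
  have c1 := subset_leq_card sub.
  have c2 := cardsU [set l in T3 | x \in l] [set l in R | x \in l].
  have cRx : #|[set l in R | x \in l]| <= 1.
    apply: card_le1 => u v /setIdP[uR xu] /setIdP[vR xv].
    exact: (Rd u v x).
  have pair : forall u v, u \in T3 -> v \in T3 -> u != v -> x \in u -> x \in v ->
      [|| x == p', x == q' | (x \in A1) && (x \in Bj)].
    move=> u v; rewrite /T3 !in_setU1 !in_set1.
    have H1 : forall l1 l2 z, l1 \in L -> l2 \in L -> z \in l1 -> z \in l2 -> l1 != l2 ->
        x \in l1 -> x \in l2 -> x == z.
      move=> l1 l2 z l1L l2L z1 z2 ne x1 x2; apply/negPn/negP => xz.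
      by move/negP: ne; apply; apply/eqP; apply: (two_lines LS l1L l2L xz).
    case/or3P => /eqP-> /or3P[]/eqP-> ne xu xv; rewrite ?eqxx // in ne.
    - by rewrite (H1 l0 A1 p') ?(H1 l0 A1 p').
    - by rewrite (H1 l0 Bj q') ?orbT.
    - by rewrite (H1 A1 l0 p') // eq_sym.
    - by rewrite xu xv !orbT.
    - by rewrite (H1 Bj l0 q') ?orbT // eq_sym.
    - by rewrite xu xv !orbT.
  case: (boolP [exists r in R, x \in r]).
    move=> /existsP[r /andP[rR xr]].
    have cT : #|[set l in T3 | x \in l]| <= 1.
      apply: card_le1 => u v /setIdP[uT xu] /setIdP[vT xv].
      apply/eqP; apply/negPn/negP => ne.
      case/or3P: (pair u v uT vT ne xu xv) => [/eqP xp|/eqP xq|/andP[xA xB]].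
      - by move: (nR r rR); rewrite -xp xr.
      - by move: (nRq r rR); rewrite -xq xr.
      - by move: (Hno' x r xA xB rR); rewrite xr.
    clear -c1 c2 cT cRx; lia.
  move=> /existsPn nr.
  have cR0 : #|[set l in R | x \in l]| = 0.
    apply: eq_card0 => l; apply/negP => /setIdP[lR xl].
    by move: (nr l); rewrite lR xl.
  have miss : exists2 m, m \in T3 & x \notin m.
    case: (boolP (x \in l0)) => xl0; last by exists l0; rewrite // /T3 setU11.
    case: (boolP (x \in A1)) => xA1; last by exists A1; rewrite // /T3 !in_setU1 eqxx orbT.
    exists Bj; first by rewrite /T3 !in_setU1 in_set1 eqxx !orbT.
    have -> : x = p'.
      apply/eqP; apply/negPn/negP => xp.
      by move/negP: A1l0; apply; apply/eqP; apply: (two_lines LS A1L l0L xp).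
    exact: pBj.
  case: miss => m mT xm.
  have cT : #|[set l in T3 | x \in l]| <= 2.
    have : [set l in T3 | x \in l] \subset T3 :\ m.
      apply/subsetP => l /setIdP[lT xl]; apply/setD1P; split => //.
      by apply/negP => /eqP lm; rewrite -lm xl in xm.
    move/subset_leq_card; move: (cardsD1 m T3); rewrite mT cT3.
    clear; lia.
  clear -c1 c2 cT cR0; lia.
have := nu2_ge tS.
rewrite cardA cardB in cU Hc cIB. clear -tau2 cX2 cS cR cU Hc cIB cI1; lia.
Qed.

End Gen.

Section Con.
Variable G : finZmodType.
Local Open Scope ring_scope.

Definition gp (a b : G) : CT G := inl (a, b).

Lemma memL g (x : CT G) : (x \in line_L g) =
  (if x is inl hb then hb.2 == g else false).
Proof.
apply/imsetP/idP => [[h _ ->]//=|]; case: x => [[a b]|//] /= /eqP->.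
by exists a.
Qed.

Lemma memP g (x : CT G) : (x \in line_p g) =
  (match x with inl hb => (hb.1 == g) && (hb.2 != 0) | inr bb => bb end).
Proof.
rewrite /line_p in_setU in_set1 /pt_p; case: x => [[a b]|bb].
  rewrite (_ : (inl (a,b) == inr true :> CT G) = false) // orbF /=.
  apply/imsetP/andP => [[h]|[/eqP-> hb]]; first by rewrite inE => hh [-> ->].
  by exists b; rewrite ?inE.
rewrite (_ : (inr bb \in _) = false); first by case: bb.
by apply/imsetP => -[h].
Qed.

Lemma memQ g (x : CT G) : (x \in line_q g) =
  (match x with inl hb => (hb.2 == hb.1 + g) && (hb.2 != 0) | inr bb => ~~ bb end).
Proof.
rewrite /line_q in_setU in_set1 /pt_q; case: x => [[a b]|bb].
  rewrite (_ : (inl (a,b) == inr false :> CT G) = false) // orbF /=.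
  apply/imsetP/andP => [[h]|[/eqP-> hb]]; first by rewrite inE => hh [-> ->]; rewrite eqxx.
  by exists a; rewrite ?inE.
rewrite (_ : (inr bb \in _) = false); first by case: bb.
by apply/imsetP => -[h].
Qed.

Lemma memPn (x : CT G) : (x \in Pn G) =
  (match x with inl hb => hb.2 != 0 | inr bb => true end).
Proof.
rewrite /Pn in_setU in_set2 /pt_p /pt_q; case: x => [[a b]|bb].
  rewrite (_ : (inl (a,b) == inr true :> CT G) = false) //.
  rewrite (_ : (inl (a,b) == inr false :> CT G) = false) // !orbF /=.
  apply/imsetP/idP => [[[c d]]|hb]; first by rewrite inE => /= hd [_ ->].
  by exists (a, b); rewrite ?inE.
by case: bb; rewrite eqxx ?orbT.
Qed.


Lemma le1_of (l1 l2 : {set CT G}) :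
  (forall x y, x \in l1 -> x \in l2 -> y \in l1 -> y \in l2 -> x = y) ->
  (#|l1 :&: l2| <= 1)%N.
Proof. by move=> H; apply: card_le1 => x y /setIP[x1 x2] /setIP[y1 y2]; apply: H. Qed.

Lemma iLL (g h : G) : g != h -> (#|line_L g :&: line_L h| <= 1)%N.
Proof.
move=> gh; apply: le1_of => [[[a b]|bb]] y; rewrite !memL //= => /eqP-> /eqP e.
by rewrite e eqxx in gh.
Qed.

Lemma iLP (g h : G) : (#|line_L g :&: line_p h| <= 1)%N.
Proof.
apply: le1_of => [[[a b]|bb]] [[c d]|dd]; rewrite !memL !memP //=.
by move=> /eqP-> /andP[/eqP-> _] /eqP-> /andP[/eqP-> _].
Qed.

Lemma iLQ (g h : G) : (#|line_L g :&: line_q h| <= 1)%N.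
Proof.
apply: le1_of => [[[a b]|bb]] [[c d]|dd]; rewrite !memL !memQ //=.
move=> /eqP-> /andP[/eqP e1 _] /eqP-> /andP[/eqP e2 _].
by rewrite e1 in e2; move/addIr: e2 => ->.
Qed.

Lemma iPP (g h : G) : g != h -> (#|line_p g :&: line_p h| <= 1)%N.
Proof.
move=> gh; apply: le1_of => [[[a b]|bb]] [[c d]|dd]; rewrite !memP //=.
- by move=> /andP[/eqP-> _] /andP[/eqP e _]; rewrite e eqxx in gh.
- by move=> /andP[/eqP-> _] /andP[/eqP e _]; rewrite e eqxx in gh.
- by move=> _ _ /andP[/eqP-> _] /andP[/eqP e _]; rewrite e eqxx in gh.
- by move=> -> _ -> _.
Qed.

Lemma iPQ (g h : G) : (#|line_p g :&: line_q h| <= 1)%N.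
Proof.
apply: le1_of => [[[a b]|bb]] [[c d]|dd]; rewrite !memP !memQ //=.
- by move=> /andP[/eqP-> _] /andP[/eqP-> _] /andP[/eqP-> _] /andP[/eqP-> _].
- by move=> _ _ ->.
- by move=> ->.
- by move=> ->.
Qed.

Lemma iQQ (g h : G) : g != h -> (#|line_q g :&: line_q h| <= 1)%N.
Proof.
move=> gh; have H : forall a b : G, b = a + g -> b = a + h -> False.
  by move=> a b -> /addrI e; rewrite e eqxx in gh.
apply: le1_of => [[[a b]|bb]] [[c d]|dd]; rewrite !memQ //=.
- by move=> /andP[/eqP e1 _] /andP[/eqP e2 _]; case: (H _ _ e1 e2).
- by move=> /andP[/eqP e1 _] /andP[/eqP e2 _]; case: (H _ _ e1 e2).
- by move=> _ _ /andP[/eqP e1 _] /andP[/eqP e2 _]; case: (H _ _ e1 e2).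
- by case: bb; case: dd.
Qed.


Lemma LnP (l : {set CT G}) : l \in Ln G ->
  [\/ exists2 g, g != 0 & l = line_L g, exists g, l = line_p g | exists g, l = line_q g].
Proof.
rewrite /Ln !in_setU => /orP[/orP[/imsetP[g]|/imsetP[g _ ->]]|/imsetP[g _ ->]].
- by rewrite inE => hg ->; apply: Or31; exists g.
- by apply: Or32; exists g.
- by apply: Or33; exists g.
Qed.

Lemma inLnL (g : G) : g != 0 -> line_L g \in Ln G.
Proof. by move=> hg; rewrite /Ln !in_setU imset_f ?inE. Qed.
Lemma inLnP (g : G) : line_p g \in Ln G.
Proof. by rewrite /Ln !in_setU imset_f ?inE ?orbT. Qed.
Lemma inLnQ (g : G) : line_q g \in Ln G.
Proof. by rewrite /Ln !in_setU imset_f ?inE ?orbT. Qed.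

Lemma ls : linear_system (Pn G) (Ln G).
Proof.
split.
  move=> l /LnP[[g hg ->]|[g ->]|[g ->]]; apply/subsetP => -[[a b]|bb];
    rewrite ?memL ?memP ?memQ memPn //=.
  - by move=> /eqP->.
  - by case/andP.
  - by case/andP.
move=> l1 l2 /LnP[[g hg ->]|[g ->]|[g ->]] /LnP[[h hh ->]|[h ->]|[h ->]] ne;
  rewrite ?iLP ?iLQ ?iPQ 1?setIC ?iLP ?iLQ ?iPQ //.
- by apply: iLL; apply: contraNneq ne => ->.
- by apply: iPP; apply: contraNneq ne => ->.
- by apply: iQQ; apply: contraNneq ne => ->.
Qed.


Lemma nz_ex : (1 < #|G|)%N -> exists w : G, w != 0.
Proof.
move/card_gt1P => [x [y [_ _ xy]]].
case: (eqVneq x 0) => [x0|]; last by exists x.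
by exists y; rewrite -x0 eq_sym.
Qed.

Lemma injL : injective (@line_L G).
Proof.
move=> g h e; have : gp 0 g \in line_L h by rewrite -e memL /=.
by rewrite memL /= => /eqP.
Qed.

Lemma injP : (1 < #|G|)%N -> injective (@line_p G).
Proof.
move=> /nz_ex [w hw] g h e; have : gp g w \in line_p h by rewrite -e memP /= eqxx hw.
by rewrite memP /= => /andP[/eqP].
Qed.

Lemma injQ : (1 < #|G|)%N -> injective (@line_q G).
Proof.
move=> /nz_ex [w hw] g h e; have : gp (w - g) w \in line_q h by rewrite -e memQ /= subrK eqxx hw.
by rewrite memQ /= => /andP[/eqP E _]; apply/esym/(addrI (w - g)); rewrite subrK -E.
Qed.

Lemma degp_set : [set l in Ln G | pt_p G \in l] = [set line_p g | g : G].
Proof.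
apply/setP => l; rewrite inE; apply/andP/imsetP => [[/LnP[[g _ ->]|[g ->]|[g ->]]]|[g _ ->]].
- by rewrite memL.
- by exists g.
- by rewrite memQ.
- by rewrite inLnP memP.
Qed.

Lemma degq_set : [set l in Ln G | pt_q G \in l] = [set line_q g | g : G].
Proof.
apply/setP => l; rewrite inE; apply/andP/imsetP => [[/LnP[[g _ ->]|[g ->]|[g ->]]]|[g _ ->]].
- by rewrite memL.
- by rewrite memP.
- by exists g.
- by rewrite inLnQ memQ.
Qed.

Lemma degp : (1 < #|G|)%N -> deg (Ln G) (pt_p G) = #|G|.
Proof. by move=> h; rewrite /deg degp_set card_imset ?cardsT //; apply: injP. Qed.

Lemma degq : (1 < #|G|)%N -> deg (Ln G) (pt_q G) = #|G|.
Proof. by move=> h; rewrite /deg degq_set card_imset ?cardsT //; apply: injQ. Qed.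

Lemma card_nz : #|[set g : G | g != 0]| = #|G|.-1.
Proof.
rewrite -(cardsC1 (0 : G)); apply: eq_card => g; by rewrite !inE.
Qed.

Lemma card_Ln : (1 < #|G|)%N -> #|Ln G| = (3 * #|G|).-1.
Proof.
move=> h1; rewrite /Ln !cardsU.
have d1 : [set line_L g | g in [set g : G | g != 0]] :&: [set line_p g | g : G] = set0.
  apply/setP => l; rewrite !inE; apply/negP => /andP[/imsetP[g _ ->] /imsetP[h _ e]].
  by move: (memL g (pt_p G)); rewrite e memP.
have d2 : ([set line_L g | g in [set g : G | g != 0]] :|: [set line_p g | g : G])
   :&: [set line_q g | g : G] = set0.
  apply/setP => l; rewrite !inE; apply/negP => /andP[/orP[]/imsetP[g _ ->] /imsetP[h _ e]].
    by move: (memL g (pt_q G)); rewrite e memQ.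
  by move: (memP g (pt_q G)); rewrite e memQ.
rewrite d1 d2 !cards0 !subn0 !card_imset ?cardsT ?card_in_imset ?card_nz;
  try exact: (injQ h1); try exact: (injP h1); try (by move=> x y _ _; apply: injL).
-
  by move: h1; case: #|G| => // n _; rewrite mulnS /=; lia.
exact: injL.
Qed.

Lemma deg_grid (a b : G) : (deg (Ln G) (gp a b) <= 3)%N.
Proof.
have sub : [set l in Ln G | gp a b \in l] \subset [set line_L b; line_p a; line_q (b - a)].
  apply/subsetP => l; rewrite inE => /andP[/LnP[[g _ ->]|[g ->]|[g ->]]].
  - by rewrite memL /= => /eqP->; rewrite !inE eqxx.
  - by rewrite memP /= => /andP[/eqP-> _]; rewrite !inE eqxx orbT.
  - rewrite memQ /= => /andP[/eqP E _]; rewrite !inE E (addrC a) addrK eqxx.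
    by rewrite !orbT.
apply: leq_trans (subset_leq_card sub) _.
rewrite setUC cardsU1 cards2; by case: (_ \notin _); case: (_ != _).
Qed.

Lemma deg_le : (2 < #|G|)%N -> forall x, x \in Pn G -> (deg (Ln G) x <= #|G|)%N.
Proof.
move=> h3 [[a b]|[]] _.
- exact: leq_trans (deg_grid a b) h3.
- by rewrite (degp (ltnW h3)).
- by rewrite (degq (ltnW h3)).
Qed.

Lemma ptp_in : pt_p G \in Pn G. Proof. by rewrite memPn. Qed.
Lemma ptq_in : pt_q G \in Pn G. Proof. by rewrite memPn. Qed.

Lemma Delta_eq : (2 < #|G|)%N -> Delta (Pn G) (Ln G) = #|G|.
Proof.
move=> h3; apply/eqP; rewrite eqn_leq; apply/andP; split.
  by apply/bigmax_leqP => x; apply: deg_le.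
by rewrite -{1}(degp (ltnW h3)); apply: (leq_bigmax_cond (pt_p G)); exact: ptp_in.
Qed.

Lemma mde_eq : (2 < #|G|)%N -> max_deg_except (Pn G) (Ln G) (pt_p G) = #|G|.
Proof.
move=> h3; apply/eqP; rewrite eqn_leq; apply/andP; split.
  by apply/bigmax_leqP => x /setD1P[_]; apply: deg_le.
rewrite -{1}(degq (ltnW h3)); apply: (leq_bigmax_cond (pt_q G)).
by apply/setD1P; split; [by [] | exact: ptq_in].
Qed.

Definition X0 : {set CT G} :=
  pt_p G |: (pt_q G |: [set gp 0 g | g in [set g : G | g != 0]]).

Lemma X0_tr : Defs.transversal (Pn G) (Ln G) X0.
Proof.
apply/andP; split.
  apply/subsetP => x /setU1P[->|/setU1P[->|/imsetP[g]]]; rewrite ?memPn //.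
  by rewrite inE => hg ->.
apply/forallP => l; apply/implyP => /LnP[[g hg ->]|[g ->]|[g ->]].
- apply: (meet_ne0 (z:=gp 0 g)); last by rewrite memL /=.
  by rewrite /X0 !in_setU1 imset_f ?orbT // inE.
- by apply: (@meet_ne0 _ X0 _ (pt_p G)); [rewrite setU11 | rewrite memP].
- by apply: (@meet_ne0 _ X0 _ (pt_q G)); [rewrite /X0 !in_setU1 eqxx orbT | rewrite memQ].
Qed.

Lemma X0_card : (#|X0| <= #|G|.+1)%N.
Proof.
rewrite /X0 cardsU1 cardsU1.
have c := leq_imset_card (gp 0) [set g : G | g != 0]; rewrite card_nz in c.
have n0 : (0 < #|G|)%N by apply/card_gt0P; exists 0.
move: c n0; case: (_ \notin _); case: (_ \notin _) => /= c n0;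
  apply: leq_trans (leq_add (leqnn _) (leq_add (leqnn _) c)) _; lia.
Qed.

Lemma sum_nz : \sum_(g : G) g = 0 -> \sum_(g in [set g : G | g != 0]) g = 0.
Proof.
move=> hs; rewrite (bigD1 0) //= add0r in hs; rewrite -[RHS]hs.
by apply: eq_bigl => g; rewrite inE.
Qed.

Lemma tau_lower : \sum_(g : G) g = 0 -> forall X,
  Defs.transversal (Pn G) (Ln G) X -> (#|G|.+1 <= #|X|)%N.
Proof.
move=> hsum X /andP[XP /forallP HX].
have hit : forall l, l \in Ln G -> exists2 z, z \in X & z \in l.
  move=> l lL; move: (HX l); rewrite lL /= => /set0Pn[z]; rewrite inE => /andP[].
  by exists z.
set Y := [set hg : G * G | inl hg \in X].
have Y2 : forall y, y \in Y -> y.2 != 0.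
  move=> y; rewrite inE => /(subsetP XP); by rewrite memPn.
have hitL : forall g, g != 0 -> exists2 y, y \in Y & y.2 = g.
  move=> g hg; have [[[a b]|bb] zX] := hit _ (inLnL hg); rewrite memL //= => /eqP e.
  by exists (a, b); rewrite ?inE.
have hitP : pt_p G \notin X -> forall g, exists2 y, y \in Y & y.1 = g.
  move=> pX g; have [[[a b]|bb] zX] := hit _ (inLnP g); rewrite memP /=.
    by move=> /andP[/eqP e _]; exists (a, b); rewrite ?inE.
  by move=> bt; move: bt zX pX => -> ->.
have hitQ : pt_q G \notin X -> forall g, exists2 y, y \in Y & y.2 - y.1 = g.
  move=> qX g; have [[[a b]|bb] zX] := hit _ (inLnQ g); rewrite memQ /=.
    move=> /andP[/eqP e _]; exists (a, b); rewrite ?inE //=.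
    by rewrite e (addrC a) addrK.
  by case: bb zX => // zX _; move: zX qX => ->.
have cXY : (#|Y| + (pt_p G \in X) + (pt_q G \in X) <= #|X|)%N.
  have ZX : [set inl y | y in Y] \subset X.
    by apply/subsetP => x /imsetP[y]; rewrite inE => yX ->.
  have cZ : #|[set (inl y : CT G) | y in Y]| = #|Y|.
    by apply: card_imset => y1 y2 [].
  have pZ : pt_p G \notin [set (inl y : CT G) | y in Y] by apply/imsetP => -[y].
  have qZ : pt_q G \notin [set (inl y : CT G) | y in Y] by apply/imsetP => -[y].
  case: (boolP (pt_p G \in X)) => pX; case: (boolP (pt_q G \in X)) => qX /=.
  - have S1 : pt_p G |: (pt_q G |: [set inl y | y in Y]) \subset X.
      by rewrite !subUset !sub1set pX qX ZX.
    move: (subset_leq_card S1); rewrite !cardsU1 cZ in_setU1 (negbTE pZ) (negbTE qZ) /=.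
    by rewrite !addn1 ?add1n.
  - have S1 : pt_p G |: [set inl y | y in Y] \subset X by rewrite !subUset !sub1set pX ZX.
    by move: (subset_leq_card S1); rewrite !cardsU1 cZ pZ /= addn0 addn1.
  - have S1 : pt_q G |: [set inl y | y in Y] \subset X by rewrite !subUset !sub1set qX ZX.
    by move: (subset_leq_card S1); rewrite !cardsU1 cZ qZ /= addn0 addn1.
  - by rewrite !addn0 -cZ subset_leq_card.
have n0 : (0 < #|G|)%N by apply/card_gt0P; exists 0.
have cL : (#|G|.-1 <= #|Y|)%N.
  rewrite -card_nz; apply: leq_trans (leq_imset_card snd Y); apply: subset_leq_card.
  by apply/subsetP => g; rewrite inE => hg; have [y yY <-] := hitL g hg; apply: imset_f.
have cP : pt_p G \notin X -> (#|G| <= #|Y|)%N.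
  move=> pX; rewrite -cardsT; apply: leq_trans (leq_imset_card fst Y); apply: subset_leq_card.
  by apply/subsetP => g _; have [y yY <-] := hitP pX g; apply: imset_f.
have cQ : pt_q G \notin X -> (#|G| <= #|Y|)%N.
  move=> qX; rewrite -cardsT; apply: leq_trans (leq_imset_card (fun y : G * G => y.2 - y.1) Y).
  apply: subset_leq_card.
  by apply/subsetP => g _; have [y yY <-] := hitQ qX g; apply: imset_f.
case: (boolP (pt_p G \in X)) => pX; case: (boolP (pt_q G \in X)) => qX;
  rewrite ?pX ?qX ?(negbTE pX) ?(negbTE qX) /= in cXY.
- move: cXY cL n0; clear; move: #|Y| #|X| #|G| => a b c; lia.
- move: cXY (cQ qX); clear; move: #|Y| #|X| #|G| => a b c; lia.
- move: cXY (cP pX); clear; move: #|Y| #|X| #|G| => a b c; lia.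
rewrite addn0 addn0 in cXY; apply: leq_trans cXY; rewrite ltnNge; apply/negP => hY.
have cYn : #|Y| = #|G| by apply/eqP; rewrite eqn_leq hY cP.
have sumT : forall F : G -> G, \sum_(j in [set: G]) F j = \sum_j F j.
  by move=> F; apply: eq_bigl => j; rewrite inE.
have fY : fst @: Y = [set: G].
  apply/eqP; rewrite eqEsubset subsetT /=; apply/subsetP => g _.
  by have [y yY <-] := hitP pX g; apply: imset_f.
have dY : (fun y : G * G => y.2 - y.1) @: Y = [set: G].
  apply/eqP; rewrite eqEsubset subsetT /=; apply/subsetP => g _.
  by have [y yY <-] := hitQ qX g; apply: imset_f.
have injF : {in Y &, injective fst} by apply/imset_injP; rewrite fY cardsT cYn.
have injD : {in Y &, injective (fun y : G * G => y.2 - y.1)}.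
  by apply/imset_injP; rewrite dY cardsT cYn.
have s1 : \sum_(y in Y) y.1 = 0.
  by rewrite -(big_imset (fun g : G => g) injF) /= fY sumT.
have s2 : \sum_(y in Y) (y.2 - y.1) = 0.
  by rewrite -(big_imset (fun g : G => g) injD) /= dY sumT.
have s3 : \sum_(y in Y) y.2 = 0.
  rewrite (eq_bigr (fun y => y.1 + (y.2 - y.1))); last by move=> y _; rewrite addrC subrK.
  by rewrite big_split /= s1 s2 addr0.
have : [exists y1 in Y, exists y2 in Y, (y1 != y2) && (y1.2 == y2.2)].
  apply: contraT => nex.
  have inj2 : {in Y &, injective snd}.
    move=> y1 y2 h1 h2 e; apply/eqP; apply/negPn/negP => ne; move/negP: nex; apply.
    apply/existsP; exists y1; rewrite h1 /=; apply/existsP; exists y2.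
    by rewrite h2 ne e eqxx.
  have : snd @: Y \subset [set g : G | g != 0].
    by apply/subsetP => g /imsetP[y yY ->]; rewrite inE Y2.
  move/subset_leq_card; rewrite card_in_imset // cYn card_nz.
  by move: n0; case: #|G| => // m _ /=; rewrite ltnn.
move=> /existsP[y1 /andP[y1Y /existsP[y2 /andP[y2Y /andP[ne /eqP e12]]]]].
set Y' := Y :\ y1.
have sY' : snd @: Y' = [set g : G | g != 0].
  apply/eqP; rewrite eqEsubset; apply/andP; split.
    by apply/subsetP => g /imsetP[y /setD1P[_ yY] ->]; rewrite inE Y2.
  apply/subsetP => g; rewrite inE => hg; have [y yY <-] := hitL g hg.
  case: (eqVneq y y1) => [->|ny].
    by rewrite e12; apply: imset_f; apply/setD1P; split => //; rewrite eq_sym.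
  by apply: imset_f; apply/setD1P.
have cY' : #|Y'| = #|G|.-1 by move: (cardsD1 y1 Y); rewrite y1Y cYn => ->.
have inj' : {in Y' &, injective snd} by apply/imset_injP; rewrite sY' card_nz cY'.
move: s3; rewrite (big_setD1 _ y1Y) /= -/Y' -(big_imset (fun g : G => g) inj') /= sY'.
by rewrite sum_nz // addr0 => /eqP; rewrite (negbTE (Y2 y1 y1Y)).
Qed.

Lemma one_nz (x1 x2 y : G) : x1 != x2 ->
  exists2 s, s != 0 & (s = x1 + y \/ s = x2 + y).
Proof.
move=> ne; case: (eqVneq (x1 + y) 0) => h1; last by exists (x1 + y); [|left].
case: (eqVneq (x2 + y) 0) => h2; last by exists (x2 + y); [|right].
by move: ne; rewrite -h2 in h1; rewrite (addIr y h1) eqxx.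
Qed.

Lemma one_nz' (x y1 y2 : G) : y1 != y2 ->
  exists2 s, s != 0 & (s = x + y1 \/ s = x + y2).
Proof.
move=> ne; have [s hs e] := one_nz x ne; exists s => //.
by rewrite !(addrC x).
Qed.

Lemma two_nz (x1 x2 y1 y2 : G) : (forall g : G, g != 0 -> g + g != 0) ->
  x1 != x2 -> y1 != y2 ->
  exists s1, exists s2, [/\ s1 != 0, s2 != 0, s1 != s2,
    [\/ s1 = x1 + y1, s1 = x1 + y2, s1 = x2 + y1 | s1 = x2 + y2] &
    [\/ s2 = x1 + y1, s2 = x1 + y2, s2 = x2 + y1 | s2 = x2 + y2]].
Proof.
move=> h2 nx ny.
have dy : x1 + y1 != x1 + y2 by apply: contra ny => /eqP /addrI ->.
have dx : x1 + y1 != x2 + y1 by apply: contra nx => /eqP /addIr ->.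
have dy2 : x2 + y1 != x2 + y2 by apply: contra ny => /eqP /addrI ->.
have dx2 : x1 + y2 != x2 + y2 by apply: contra nx => /eqP /addIr ->.
case: (eqVneq (x1 + y1) 0) => s11.
  have s12 : x1 + y2 != 0 by rewrite -s11 eq_sym.
  have s21 : x2 + y1 != 0 by rewrite -s11 eq_sym.
  case: (eqVneq (x2 + y2) 0) => s22.
    exists (x1 + y2), (x2 + y1); split => //; [|by apply: Or42|by apply: Or43].
    apply/negP => /eqP e.
    have ey1 : y1 = - x1 by apply/eqP; rewrite -addr_eq0 addrC s11.
    have ey2 : y2 = - x2 by apply/eqP; rewrite -addr_eq0 addrC s22.
    move: e; rewrite ey1 ey2 => e.
    have : (x1 - x2) + (x1 - x2) = 0 by rewrite {2}e addrA subrK subrr.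
    by apply/eqP; apply: h2; rewrite subr_eq0.
  by exists (x1 + y2), (x2 + y2); split => //; [apply: Or42|apply: Or44].
case: (eqVneq (x1 + y2) 0) => s12; last by exists (x1 + y1), (x1 + y2); split => //; [apply: Or41|apply: Or42].
case: (eqVneq (x2 + y1) 0) => s21; last by exists (x1 + y1), (x2 + y1); split => //; [apply: Or41|apply: Or43].
have ey2 : y2 = - x1 by apply/eqP; rewrite -addr_eq0 addrC s12.
have ex2 : x2 = - y1 by apply/eqP; rewrite -addr_eq0 s21.
have e22 : x2 + y2 = - (x1 + y1) by rewrite ey2 ex2 opprD addrC.
exists (x1 + y1), (x2 + y2); split => //; [by rewrite e22 oppr_eq0| |by apply: Or41|by apply: Or44].
rewrite e22; apply/negP => /eqP e.
by move: (h2 _ s11); rewrite {2}e subrr eqxx.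
Qed.


Lemma tau_eq : \sum_(g : G) g = 0 -> tau (Pn G) (Ln G) = #|G|.+1.
Proof.
move=> hs; apply/eqP; rewrite eqn_leq; apply/andP; split.
  exact: leq_trans (tau_le X0_tr) X0_card.
rewrite /tau; apply: (big_ind (fun m => (#|G| < m)%N)).
- apply: leq_trans (tau_lower hs X0_tr) _; apply: subset_leq_card.
  by case/andP: X0_tr.
- by move=> x y hx hy; rewrite leq_min hx hy.
- by move=> X; apply: tau_lower.
Qed.

Lemma cardU_le (U : finType) (A B : {set U}) : (#|A :|: B| <= #|A| + #|B|)%N.
Proof. by rewrite cardsU leq_subr. Qed.

Lemma nu2_lower : (2 < #|G|)%N -> (#|G|.+1 <= nu2 (Ln G))%N.
Proof.
move=> h3; have h1 : (1 < #|G|)%N by apply: ltnW.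
have [w hw] := nz_ex h1.
set IL := [set line_L g | g in [set g : G | g != 0]].
set S0 := line_p 0 |: (line_p w |: IL).
have nIL : forall g, line_p g \notin IL.
  move=> g; apply/imsetP => -[h _ e]; by move: (memP g (pt_p G)); rewrite e memL.
have cIL : #|IL| = #|G|.-1 by rewrite card_in_imset ?card_nz // => x y _ _; apply: injL.
have cS : #|S0| = #|G|.+1.
  rewrite /S0 !cardsU1 in_setU1 (negbTE (nIL _)) (nIL w) orbF cIL.
  have -> : (line_p 0 != line_p w) by apply: contra hw => /eqP /(injP h1) <-.
  by rewrite /= add1n add1n (ltn_predK h1).
apply: (@leq_trans #|S0|); first by rewrite cS.
apply: nu2_ge.
apply/andP; split.
  apply/subsetP => l /setU1P[->|/setU1P[->|/imsetP[g]]]; rewrite ?inLnP //.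
  by rewrite inE => hg ->; apply: inLnL.
apply/forallP => -[[a b]|bb].
  have sub : [set l in S0 | gp a b \in l] \subset [set line_L b; line_p a].
    apply/subsetP => l /setIdP[]; rewrite /S0 => /setU1P[->|/setU1P[->|/imsetP[g _ ->]]].
    - by rewrite memP /= => /andP[/eqP-> _]; rewrite !inE eqxx orbT.
    - by rewrite memP /= => /andP[/eqP-> _]; rewrite !inE eqxx orbT.
    - by rewrite memL /= => /eqP->; rewrite !inE eqxx.
  by apply: leq_trans (subset_leq_card sub) _; rewrite cards2; case: (_ != _).
have sub : [set l in S0 | inr bb \in l] \subset [set line_p 0; line_p w].
  apply/subsetP => l /setIdP[]; rewrite /S0 => /setU1P[->|/setU1P[->|/imsetP[g _ ->]]].
  - by rewrite !inE eqxx.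
  - by rewrite !inE eqxx orbT.
  - by rewrite memL.
by apply: leq_trans (subset_leq_card sub) _; rewrite cards2; case: (_ != _).
Qed.


Lemma nu2_upper : (2 < #|G|)%N -> (forall g : G, g != 0 -> g + g != 0) ->
  (nu2 (Ln G) <= #|G|.+1)%N.
Proof.
move=> h3 h2g; have h1 : (1 < #|G|)%N by apply: ltnW.
apply/bigmax_leqP => S /andP[SL /forallP H2].
set IL := [set line_L g | g in [set g : G | g != 0]].
set IP := [set line_p g | g : G].
set IQ := [set line_q g | g : G].
have cover : S \subset (S :&: IL) :|: (S :&: IP) :|: (S :&: IQ).
  apply/subsetP => l lS; rewrite !in_setU !in_setI lS /=.
  by move: (subsetP SL l lS); rewrite /Ln !in_setU.
have cS : (#|S| <= #|S :&: IL| + #|S :&: IP| + #|S :&: IQ|)%N.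
  apply: leq_trans (subset_leq_card cover) _; apply: leq_trans (cardU_le _ _) _.
  by rewrite leq_add2r cardU_le.
have cP : (#|S :&: IP| <= 2)%N.
  apply: leq_trans (H2 (pt_p G)); apply: subset_leq_card; apply/subsetP => l.
  by rewrite in_setI => /andP[lS /imsetP[g _ e]]; subst l; rewrite inE lS memP.
have cQ : (#|S :&: IQ| <= 2)%N.
  apply: leq_trans (H2 (pt_q G)); apply: subset_leq_card; apply/subsetP => l.
  by rewrite in_setI => /andP[lS /imsetP[g _ e]]; subst l; rewrite inE lS memQ.
have K : forall x y, line_p x \in S -> line_q y \in S -> x + y != 0 -> line_L (x + y) \notin S.
  move=> x y px qy nz; apply/negP => Ls.
  move: (H2 (gp x (x + y))); apply/negP; rewrite -ltnNge; apply/card_gt2P.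
  exists (line_p x), (line_q y), (line_L (x + y)); split; split.
  - by rewrite inE px memP /= eqxx nz.
  - by rewrite inE qy memQ /= eqxx nz.
  - by rewrite inE Ls memL /=.
  - by apply/negP => /eqP e; move: (memP x (pt_p G)); rewrite e memQ.
  - by apply/negP => /eqP e; move: (memQ y (pt_q G)); rewrite e memL.
  - by apply/negP => /eqP e; move: (memL (x + y) (pt_p G)); rewrite e memP.
have miss : forall M : {set G}, M \subset [set g : G | g != 0] ->
    (forall m, m \in M -> line_L m \notin S) ->
    (#|S :&: IL| + #|M| <= #|G|.-1)%N.
  move=> M Mnz HM.
  have sub : S :&: IL \subset (@line_L G) @: ([set g : G | g != 0] :\: M).
    apply/subsetP => l; rewrite in_setI => /andP[lS /imsetP[g hg e]]; subst l.
    apply: imset_f; rewrite in_setD hg andbT; apply/negP => gM.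
    by move: (HM g gM); rewrite lS.
  have c1 := leq_trans (subset_leq_card sub) (leq_imset_card _ _).
  have c2 := cardsD [set g : G | g != 0] M.
  rewrite (setIidPr Mnz) card_nz in c2.
  have c3 := subset_leq_card Mnz; rewrite card_nz in c3.
  move: c1 c2 c3; clear; move: #|_ :&: _| #|_ :\: _| #|M| #|G| => a b c d; lia.
have cIL : (#|S :&: IL| <= #|G|.-1)%N.
  by have := miss set0 (sub0set _); rewrite cards0 addn0; apply => m; rewrite inE.
have getP2 : (1 < #|S :&: IP|)%N -> exists x1, exists x2,
    [/\ x1 != x2, line_p x1 \in S & line_p x2 \in S].
  move/card_gt1P => [l1 [l2 []]]; rewrite !in_setI => /andP[l1S /imsetP[x1 _ e1]].
  move=> /andP[l2S /imsetP[x2 _ e2]] ne; subst l1 l2; exists x1, x2; split => //.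
  by apply: contra ne => /eqP ->.
have getQ2 : (1 < #|S :&: IQ|)%N -> exists y1, exists y2,
    [/\ y1 != y2, line_q y1 \in S & line_q y2 \in S].
  move/card_gt1P => [l1 [l2 []]]; rewrite !in_setI => /andP[l1S /imsetP[x1 _ e1]].
  move=> /andP[l2S /imsetP[x2 _ e2]] ne; subst l1 l2; exists x1, x2; split => //.
  by apply: contra ne => /eqP ->.
have getP1 : (0 < #|S :&: IP|)%N -> exists x, line_p x \in S.
  by move/card_gt0P => [l]; rewrite in_setI => /andP[lS /imsetP[x _ e]]; exists x; rewrite -e.
have getQ1 : (0 < #|S :&: IQ|)%N -> exists x, line_q x \in S.
  by move/card_gt0P => [l]; rewrite in_setI => /andP[lS /imsetP[x _ e]]; exists x; rewrite -e.
have M1 : forall s, s != 0 -> line_L s \notin S -> (#|S :&: IL| + 1 <= #|G|.-1)%N.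
  move=> s hs Ls; have := miss [set s]; rewrite cards1; apply.
    by rewrite sub1set inE.
  by move=> m; rewrite inE => /eqP->.
move: cS cP cQ cIL.
case: (leqP (#|S :&: IP| + #|S :&: IQ|) 2) => hs.
  move=> cS cP cQ cIL; move: cS cIL hs h1; clear.
  move: #|S| #|S :&: IL| #|S :&: IP| #|S :&: IQ| #|G| => a b c d e; lia.
case: (leqP 2 #|S :&: IP|) => hb; case: (leqP 2 #|S :&: IQ|) => hg.
- have [x1 [x2 [nx px1 px2]]] := getP2 hb.
  have [y1 [y2 [ny qy1 qy2]]] := getQ2 hg.
  have [s1 [s2 [n1 n2 n12 e1 e2]]] := two_nz h2g nx ny.
  have L1 : forall s, [\/ s = x1 + y1, s = x1 + y2, s = x2 + y1 | s = x2 + y2] ->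
      s != 0 -> line_L s \notin S.
    by move=> s [] -> hs0; apply: K.
  have := miss [set s1; s2]; rewrite cards2 n12.
  have -> : [set s1; s2] \subset [set g : G | g != 0].
    by apply/subsetP => g; rewrite !inE => /orP[]/eqP->.
  move=> /(_ isT) H.
  have {}H : (#|S :&: IL| + 2 <= #|G|.-1)%N.
    by apply: H => m; rewrite !inE => /orP[]/eqP->; apply: L1.
  move=> cS cP cQ cIL; move: H cS cP cQ h3; clear.
  move: #|S| #|S :&: IL| #|S :&: IP| #|S :&: IQ| #|G| => a b c d e; lia.
- have [x1 [x2 [nx px1 px2]]] := getP2 hb.
  move=> cS cP cQ cIL.
  have [y qy] : exists y, line_q y \in S.
    by apply: getQ1; move: hs hg cP; clear; move: #|_ :&: IP| #|_ :&: IQ| => a b; lia.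
  have [s hs0 es] := one_nz y nx.
  have H := M1 s hs0 (ltac:(case: es => e; rewrite e; apply: K => //; by rewrite -e)).
  move: H cS cP cQ h3 hg; clear.
  move: #|S| #|S :&: IL| #|S :&: IP| #|S :&: IQ| #|G| => a b c d e; lia.
- have [y1 [y2 [ny qy1 qy2]]] := getQ2 hg.
  move=> cS cP cQ cIL.
  have [x px] : exists x, line_p x \in S.
    by apply: getP1; move: hs hb cQ; clear; move: #|_ :&: IP| #|_ :&: IQ| => a b; lia.
  have [s hs0 es] := one_nz' x ny.
  have H := M1 s hs0 (ltac:(case: es => e; rewrite e; apply: K => //; by rewrite -e)).
  move: H cS cP cQ h3 hb; clear.
  move: #|S| #|S :&: IL| #|S :&: IP| #|S :&: IQ| #|G| => a b c d e; lia.
- by move: hs hb hg; clear; move: #|_ :&: IP| #|_ :&: IQ| => a b; lia.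
Qed.

End Con.

Theorem theorem3p2 :
  (forall (G : finZmodType) (k : nat),
      0 < k -> #|G| = k.*2.+1 ->
      (\sum_(g : G) g)%R = 0%R ->
      (forall g : G, g != 0%R -> (g + g)%R != 0%R) ->
      let n := k.*2.+1 in
      [/\ linear_system (Pn G) (Ln G),
          tau (Pn G) (Ln G) = n.+1,
          nu2 (Ln G) = n.+1,
          [/\ deg (Ln G) (pt_p G) = n, deg (Ln G) (pt_q G) = n,
              Delta (Pn G) (Ln G) = deg (Ln G) (pt_p G),
              max_deg_except (Pn G) (Ln G) (pt_p G) = deg (Ln G) (pt_q G)
            & (pt_p G \in Pn G) && (pt_q G \in Pn G)]
        & #|Ln G| = 3 * n - 1 /\
          #|Ln G| + 2 = deg (Ln G) (pt_p G) + deg (Ln G) (pt_q G) + nu2 (Ln G)])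
  /\
  (forall (T : finType) (P : {set T}) (L : {set {set T}}) (p' : T),
      linear_system P L ->
      (forall l, l \in L -> l != set0) ->
      p' \in P -> deg L p' = Delta P L ->
      nu2 L < #|L| ->
      #|L| + 3 <= deg L p' + max_deg_except P L p' + nu2 L ->
      tau P L + 1 <= nu2 L).
Proof.
split; last first.
  by move=> T P L p' LS Lne pP dp _ Hc; apply: (part2 LS Lne pP dp Hc).
move=> G k k0 cG hs h2 n.
have h3 : 2 < #|G| by rewrite cG; move: k0; clear; lia.
have h1 : 1 < #|G| by apply: ltnW.
have nu : nu2 (Ln G) = #|G|.+1.
  by apply/eqP; rewrite eqn_leq nu2_upper // nu2_lower.
rewrite /n -cG.
rewrite (degp h1) (degq h1) (Delta_eq h3) (mde_eq h3) nu (card_Ln h1) (tau_eq hs).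
split => //; first exact: ls.
  by rewrite ptp_in ptq_in.
split; first by rewrite subn1.
by move: h1; clear; case: #|G| => // m _; rewrite /=; lia.
Qed.
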